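(* Let $G$ be a graph containing no cycle of length 6 and let $x\in V(G)$. Then $x$ is extendable in $G$ if and only if $x$ is extendable in $H_x$.
   Context: All graphs are finite, simple and undirected; ''containing no cycle of length 6'' means having no subgraph (not necessarily induced) isomorphic to $C_6$. For a vertex set $S$, $N_i(S)$ is the set of vertices at distance exactly $i$ from $S$, $N_i[S]$ the set at distance at most $i$, $N(S)=N_1(S)$, $N[S]=N_1[S]$, and $N(v)=N(\{v\})$ etc.; $S$ dominates $T$ if $T\subseteq N[S]$. A vertex $v$ of a graph $H$ is extendable in $H$ if there is no independent set $S\subseteq N_2(v)$ (distances computed in $H$) dominating $N(v)$ (in $H$). Let $A^*$ be the set of connected components $A$ of $G[N_2(x)]$ for which there exists a vertex $a\in V(A)$ with $N(x)\cap N(a)=N(x)\cap N(V(A))$, and let $V(A^* )$ be the union of their vertex sets. Define $H_x=G[N_2[x]\setminus N[V(A^* )]]$ (neighbourhoods taken in $G$). *)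

(* Defs.v *)
(* A finite simple graph is a symmetric irreflexive relation
   e : rel T on a finType T. Induced subgraphs are given by a vertex set U. *)
From mathcomp Require Import all_boot.
Set Implicit Arguments. Unset Strict Implicit. Unset Printing Implicit Defensive.

Section Graphs.
Variable T : finType.
Variable e : rel T.

(* ball U S i = N_i[S] computed in the induced subgraph G[U]
   (vertices of U at distance at most i from S :&: U). *)
Definition ball (U S : {set T}) (i : nat) : {set T} :=
  iter i (fun B => B :|: [set y in U | [exists z in B, e z y]]) (S :&: U).

Definition Nd (U S : {set T}) (i : nat) : {set T} :=
  if i is j.+1 then ball U S i :\: ball U S j else ball U S 0.

Definition independent (S : {set T}) : bool :=
  [forall y in S, forall z in S, ~~ e y z].

Definition extendable (U : {set T}) (v : T) : Prop :=
  ~ exists S : {set T},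
      [/\ S \subset Nd U [set v] 2, independent S & Nd U [set v] 1 \subset ball U S 1].

(* G contains no (not necessarily induced) cycle of length 6 *)
Definition C6_free : Prop :=
  ~ exists f : 'I_6 -> T, injective f /\ forall i : 'I_6, e (f i) (f (ordS i)).

Section Hx.
Variable x : T.
Definition N2x : {set T} := Nd setT [set x] 2.
Definition N1x : {set T} := Nd setT [set x] 1.
Definition rN2 : rel T := [rel y z | [&& e y z, y \in N2x & z \in N2x]].
Definition comp (a : T) : {set T} := [set z | connect rN2 a z].
Definition good_comp (A : {set T}) : bool :=
  [exists a in A, N1x :&: Nd setT [set a] 1 == N1x :&: Nd setT A 1].
Definition VAstar : {set T} := [set y in N2x | good_comp (comp y)].
(* vertex set of H_x = G[N_2[x] \ N[V(A-star)]] *)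
Definition Hx_set : {set T} := ball setT [set x] 2 :\: ball setT VAstar 1.
End Hx.
End Graphs.

(* Main.v *)
Require Import Defs.
From mathcomp Require Import all_boot.
Set Implicit Arguments. Unset Strict Implicit. Unset Printing Implicit Defensive.

Section S.
Variable T : finType.
Variable e : rel T.
Hypothesis e_sym : symmetric e.
Hypothesis e_irr : irreflexive e.

Lemma ball0E (U S : {set T}) (y : T) : (y \in ball e U S 0) = (y \in S) && (y \in U).
Proof. by rewrite /ball /= inE. Qed.

Lemma ball1P (U S : {set T}) (y : T) : y \in ball e U S 1 <-> y \in U /\ (y \in S \/ exists z, [/\ z \in S, z \in U & e z y]).
Proof.
rewrite /ball /= !inE; split.
  case/orP=> [/andP[-> ->]|/andP[-> /existsP[z]]]; first by split=> //; left.
  by rewrite !inE => /andP[/andP[? ?] ?]; split=> //; right; exists z.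
case=> -> [->|[z [h1 h2 h3]]]; rewrite ?orbT //; apply/orP; right; apply/existsP; exists z.
by rewrite !inE h1 h2 h3.
Qed.

Lemma ball2P (U S : {set T}) (y : T) : y \in ball e U S 2 <-> y \in ball e U S 1 \/ (y \in U /\ exists z, z \in ball e U S 1 /\ e z y).
Proof.
rewrite [ball e U S 2]/ball /= inE; split.
  case/orP=> [?|]; first by left.
  by rewrite inE => /andP[? /existsP[z /andP[? ?]]]; right; split=> //; exists z.
case=> [->//|[? [z [? ?]]]]; apply/orP; right; rewrite inE; apply/andP; split=> //.
by apply/existsP; exists z; apply/andP.
Qed.

Lemma Nd1P (U : {set T}) (x y : T) : x \in U -> (y \in Nd e U [set x] 1 <-> y \in U /\ e x y).
Proof.
move=> hx; rewrite /Nd in_setD ball0E in_set1.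
split.
  case/andP=> hn /ball1P [hyU [/set1P Ey|[z [/set1P -> _ h]]]] //.
  by rewrite Ey eqxx hx in hn.
case=> hyU hxy; apply/andP; split.
  have -> : (y == x) = false.
    by apply/negbTE; apply: contraTneq hxy => ->; rewrite e_irr.
  by [].
by apply/ball1P; split=> //; right; exists x; rewrite inE.
Qed.

Lemma Nd2P (U : {set T}) (x y : T) : x \in U -> (y \in Nd e U [set x] 2 <->
   [/\ y \in U, y != x, ~~ e x y & exists z, [/\ z \in U, e x z & e z y]]).
Proof.
move=> hx; rewrite /Nd in_setD; split.
  case/andP=> hn /ball2P [h1|[hyU [z [hz hzy]]]]; first by rewrite h1 in hn.
  have hyx : y != x.
    by apply: contraNneq hn => ->; apply/ball1P; split=> //; left; rewrite inE.
  have hxy : ~~ e x y.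
    by apply: contra hn => h; apply/ball1P; split=> //; right; exists x; rewrite inE.
  split=> //.
  case/ball1P: hz => hzU [/set1P Ez|[w [/set1P -> _ hw]]].
    by move: hxy; rewrite -Ez hzy.
  by exists z.
case=> hyU hyx hxy [z [hzU hxz hzy]]; apply/andP; split.
  apply/negP => /ball1P [_ [/set1P Ey|[w [/set1P Ew _ hw]]]].
    by rewrite Ey eqxx in hyx.
  by move: hxy; rewrite -Ew hw.
apply/ball2P; right; split=> //; exists z; split=> //.
by apply/ball1P; split=> //; right; exists x; rewrite inE.
Qed.

Variable x : T.
Local Notation H := (Hx_set e x).
Local Notation N2 := (N2x e x).
Local Notation VA := (VAstar e x).
Local Notation cmp := (Defs.comp e x).

Lemma rN2_sym : symmetric (rN2 e x).
Proof.
move=> y z; apply/idP/idP => /and3P[h1 h2 h3]; apply/and3P; split => //; by rewrite e_sym.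
Qed.

Lemma comp_sub y w : y \in N2 -> w \in cmp y -> w \in N2.
Proof.
move=> hy hw; have /connectP [p hp ->] : connect (rN2 e x) y w by rewrite inE in hw.
clear hw; elim: p y hy hp => //= a p IH y hy /andP[/and3P[_ _ ha] hp].
exact: IH ha hp.
Qed.

Lemma comp_eq y z : connect (rN2 e x) y z -> cmp y = cmp z.
Proof.
move=> h; apply/setP=> w; rewrite !inE; apply/idP/idP => h'.
  by apply: connect_trans h'; rewrite (sym_connect_sym rN2_sym).
exact: connect_trans h h'.
Qed.

Lemma VA_N2 y : y \in VA -> y \in N2.
Proof. by rewrite inE => /andP[]. Qed.

Lemma VA_closed z s : z \in VA -> s \in N2 -> e z s -> s \in VA.
Proof.
move=> hzV hs hzs; move: hzV; rewrite inE => /andP[hz hg]; rewrite inE hs /=.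
have h : connect (rN2 e x) z s by apply: connect1; rewrite /rN2 /= hzs hz hs.
by rewrite -(comp_eq h).
Qed.

Definition pk (A : {set T}) :=
  [pick a in A | N1x e x :&: Nd e setT [set a] 1 == N1x e x :&: Nd e setT A 1].
Definition R := [set a in VA | pk (cmp a) == Some a].

Lemma inR a : a \in R -> a \in VA /\ pk (cmp a) = Some a.
Proof. by rewrite /R in_set => /andP[? /eqP]. Qed.

Lemma hxH : x \in H.
Proof.
rewrite /Hx_set in_setD; apply/andP; split.
  apply/negP => /ball1P [_ [hx|[z [hz _ hzx]]]].
    by case/(Nd2P _ (in_setT x)): (VA_N2 hx); rewrite eqxx.
  case/(Nd2P _ (in_setT x)): (VA_N2 hz) => _ _ /negP; by rewrite e_sym.
apply/ball2P; left; apply/ball1P; split; [by rewrite in_setT | by left; rewrite inE].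
Qed.

Lemma main : extendable e setT x <-> extendable e H x.
Proof.
have hxT : x \in [set: T] by rewrite in_setT.
split => hext [S [hS hI hD]]; apply: hext.
- exists (S :|: R).
  have hSH y : y \in S -> y \in H.
    by move=> hy; case/(Nd2P _ hxH): (subsetP hS y hy).
  have hSV y z : y \in S -> z \in VA -> ~~ e y z.
    move=> /hSH; rewrite /Hx_set in_setD => /andP[hn _] hz; apply: contra hn => hyz.
    by apply/ball1P; split; [rewrite in_setT| right; exists z; rewrite e_sym hyz in_setT].
  split.
  + apply/subsetP => s; rewrite in_setU => /orP[hs|].
      case/(Nd2P _ hxH): (subsetP hS s hs) => hsH hsx hxs [u [huH hxu hus]].
      by apply/(Nd2P _ hxT); split => //; exists u; rewrite in_setT.
    by rewrite inE => /andP[/VA_N2 h _].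
  + apply/forallP => y; apply/implyP => hy; apply/forallP => z; apply/implyP => hz.
    move: hy hz; rewrite !in_setU => /orP[hy|hy] /orP[hz|hz].
    * by move/forallP/(_ y)/implyP/(_ hy)/forallP/(_ z)/implyP/(_ hz): hI.
    * by apply: hSV hy _; case/inR: hz.
    * by rewrite e_sym; apply: hSV hz _; case/inR: hy.
    * move: hy hz => /inR [hyV hy] /inR [hzV hz].
      apply/negP => hyz.
      have h : connect (rN2 e x) y z by apply: connect1; rewrite /rN2 /= hyz (VA_N2 hyV) (VA_N2 hzV).
      move: hy; rewrite (comp_eq h) hz => -[Ezy].
      by move: hyz; rewrite Ezy e_irr.
  + apply/subsetP => u /(Nd1P _ hxT) [_ hxu].
    apply/ball1P; split; first by rewrite in_setT.
    case: (boolP (u \in ball e setT VA 1)) => hu.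
      case/ball1P: hu => _ [huV|[z [hzV _ hzu]]].
        by case/(Nd2P _ hxT): (VA_N2 huV) => _ _ /negP.
      have hzV' := hzV; rewrite inE in hzV'; case/andP: hzV' => hzN hg.
      have [a [ha hc hpk]] : exists a, [/\ a \in cmp z,
         N1x e x :&: Nd e setT [set a] 1 == N1x e x :&: Nd e setT (cmp z) 1
         & pk (cmp z) = Some a].
        rewrite /pk; case: pickP => [a /andP[ha hc]|hn]; first by exists a.
        move/existsP: hg => [a /andP[ha hc]]; by move: (hn a); rewrite /= ha hc.
      have ceq : cmp z = cmp a by apply: comp_eq; rewrite inE in ha.
      right; exists a; split.
      * rewrite in_setU; apply/orP; right; rewrite inE -ceq hpk eqxx andbT.
        rewrite inE (comp_sub hzN ha) /= -ceq; exact: hg.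
      * by rewrite in_setT.
      * have : u \in N1x e x :&: Nd e setT (cmp z) 1.
          rewrite in_setI; apply/andP; split; first by apply/(Nd1P _ hxT); rewrite in_setT.
          rewrite /Nd in_setD ball0E; apply/andP; split.
            apply/negP => /andP[/(comp_sub hzN) huN _].
            by case/(Nd2P _ hxT): huN => _ _ /negP.
          apply/ball1P; split; [by rewrite in_setT| right; exists z; rewrite in_setT hzu].
          by split => //; rewrite inE connect0.
        rewrite -(eqP hc) in_setI => /andP[_ /(Nd1P _ (in_setT a))[_ h]]; exact: h.
    have huH : u \in H.
      rewrite /Hx_set in_setD hu /=; apply/ball2P; left; apply/ball1P.
      split; [by rewrite in_setT | right; exists x; rewrite inE eqxx in_setT hxu].
      by [].
    have : u \in Nd e H [set x] 1 by apply/(Nd1P _ hxH).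
    move/(subsetP hD)/ball1P => [_ [huS|[s [hsS hsH hsu]]]].
      by left; rewrite in_setU huS.
    by right; exists s; rewrite in_setU hsS in_setT.
- pose S' := [set s in S | [exists u, (u \in H) && e x u && e u s]].
  exists S'.
  have sH s : s \in S' -> s \in H.
    rewrite inE => /andP[hs /existsP[u /andP[/andP[huH hxu] hus]]].
    have hsN : s \in N2 := subsetP hS s hs.
    rewrite /Hx_set in_setD; apply/andP; split; last first.
      by move: hsN; rewrite /N2x /Nd in_setD => /andP[_ ->].
    apply/negP => /ball1P [_ h].
    have hsV : s \in VA.
      by case: h => [//|[z [hz _ hzs]]]; exact: VA_closed hz hsN hzs.
    move: huH; rewrite /Hx_set in_setD => /andP[/negP hn _]; apply: hn.
    by apply/ball1P; split; [rewrite in_setT| right; exists s; rewrite in_setT e_sym hus].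
  split.
  + apply/subsetP => s hs'; have hsH := sH s hs'.
    move: hs'; rewrite inE => /andP[hs /existsP[u /andP[/andP[huH hxu] hus]]].
    case/(Nd2P _ hxT): (subsetP hS s hs) => _ hsx hxs _.
    by apply/(Nd2P _ hxH); split => //; exists u.
  + apply/forallP => y; apply/implyP => hy; apply/forallP => z; apply/implyP => hz.
    move: hy hz; rewrite !inE => /andP[hy _] /andP[hz _].
    by move/forallP/(_ y)/implyP/(_ hy)/forallP/(_ z)/implyP/(_ hz): hI.
  + apply/subsetP => u /(Nd1P _ hxH) [huH hxu].
    have : u \in Nd e setT [set x] 1 by apply/(Nd1P _ hxT); rewrite in_setT.
    move/(subsetP hD)/ball1P => [_ [huS|[s [hs _ hsu]]]].
      by case/(Nd2P _ hxT): (subsetP hS u huS) => _ _ /negP.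
    have hs' : s \in S'.
      by rewrite inE hs /=; apply/existsP; exists u; rewrite huH hxu e_sym hsu.
    by apply/ball1P; split => //; right; exists s; split => //; exact: sH.
Qed.
End S.

Theorem lemma2p8 (T : finType) (e : rel T) (e_sym : symmetric e)
  (e_irr : irreflexive e) (hC6 : C6_free e) (x : T) :
  extendable e setT x <-> extendable e (Hx_set e x) x.
Proof. exact: main. Qed.
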